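(* Let $\alpha,\beta>0$, $k\ge0$ an integer, and $\lambda=\Gamma(\alpha k+\alpha+\beta)/\Gamma(\alpha k+\beta)$. If $X\sim\mathrm{MLFD}(\lambda,\alpha,\beta)$, then $P(X=k)=P(X=k+1)$ and $P(X=k)>P(X=j)$ for every integer $j\ge0$ with $j\notin\{k,k+1\}$; i.e. $X$ has exactly the two modes $k$ and $k+1$.
   Context: For $\alpha>0,\beta>0$ and $z\in\mathbb{C}$, the generalized Mittag-Leffler function is $E_{\alpha,\beta}(z)=\sum_{k=0}^\infty z^k/\Gamma(\alpha k+\beta)$. For $\lambda,\alpha,\beta>0$, the Mittag-Leffler function distribution $\mathrm{MLFD}(\lambda,\alpha,\beta)$ is the distribution on $\{0,1,2,\dots\}$ with $P(X=k)=\lambda^k/\{\Gamma(\alpha k+\beta)E_{\alpha,\beta}(\lambda)\}$. *)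

(* Defs.v *)
From Stdlib Require Import Reals Rprod Factorial ClassicalEpsilon.
Open Scope R_scope.

(* Gauss/Euler limit form of the Gamma function:
   Gamma(x) = lim_{n->oo} n! n^x / (x (x+1) ... (x+n)),  valid for x > 0. *)
Definition Gamma_seq (x : R) (n : nat) : R :=
  INR (fact n) * Rpower (INR n) x / prod_f_R0 (fun i => x + INR i) n.

Definition Gamma (x : R) : R :=
  epsilon (inhabits 0) (fun l => Un_cv (Gamma_seq x) l).

Definition MittagLeffler (alpha beta z : R) : R :=
  epsilon (inhabits 0)
    (fun l => infinite_sum (fun k => z ^ k / Gamma (alpha * INR k + beta)) l).

Definition MLFD_pmf (lambda alpha beta : R) (k : nat) : R :=
  lambda ^ k / (Gamma (alpha * INR k + beta) * MittagLeffler alpha beta lambda).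

(* Main.v *)
Require Import Defs.
From Stdlib Require Import Reals Rprod Factorial ClassicalEpsilon Lra Lia.
Open Scope R_scope.

Lemma exp_le' a b : a <= b -> exp a <= exp b.
Proof. intros [H|H]. left; now apply exp_increasing. subst; lra. Qed.

Lemma ln_le_sub1 z : 0 < z -> ln z <= z - 1.
Proof. intros Hz. pose proof (exp_ineq1_le (ln z)). rewrite exp_ln in H; lra. Qed.

Lemma ln_ge z : 0 < z -> 1 - / z <= ln z.
Proof. intros Hz. pose proof (ln_le_sub1 (/ z) (Rinv_0_lt_compat _ Hz)).
  rewrite ln_Rinv in H; lra. Qed.

Lemma prod_pos x n : 0 < x -> 0 < prod_f_R0 (fun i => x + INR i) n.
Proof. intros Hx. induction n.
  - simpl; lra.
  - change (prod_f_R0 (fun i => x + INR i) (S n)) with (prod_f_R0 (fun i => x + INR i) n * (x + INR (S n))).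
    apply Rmult_lt_0_compat; auto. pose proof (pos_INR (S n)); lra. Qed.

Lemma Gseq_pos x n : 0 < x -> 0 < Gamma_seq x n.
Proof. intros Hx. unfold Gamma_seq, Rdiv. apply Rmult_lt_0_compat.
  apply Rmult_lt_0_compat. apply INR_fact_lt_0. unfold Rpower; apply exp_pos.
  apply Rinv_0_lt_compat, prod_pos; auto. Qed.

Definition rho x (n : nat) := Rpower ((INR n + 2)/(INR n + 1)) x * (INR n + 2)/(x + INR n + 2).

Lemma Gseq_rec x n : 0 < x -> Gamma_seq x (S (S n)) = Gamma_seq x (S n) * rho x n.
Proof. intros Hx. unfold Gamma_seq, rho.
  replace (fact (S (S n))) with (S (S n) * fact (S n))%nat by reflexivity.
  rewrite mult_INR.
  change (prod_f_R0 (fun i => x + INR i) (S (S n))) with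
    (prod_f_R0 (fun i => x + INR i) (S n) * (x + INR (S (S n)))).
  replace (INR (S (S n))) with (INR n + 2) by (rewrite !S_INR; ring).
  replace (INR (S n)) with (INR n + 1) by (rewrite !S_INR; ring).
  pose proof (pos_INR n) as Hn.
  replace (Rpower (INR n + 2) x) with (Rpower (INR n + 1) x * Rpower ((INR n + 2)/(INR n + 1)) x).
  2:{ rewrite Rpower_mult_distr; try (apply Rdiv_lt_0_compat); try lra. f_equal; field; lra. }
  pose proof (prod_pos x (S n) Hx).
  replace (S n) with (S n) by reflexivity.
  field. repeat split; lra.
Qed.

Lemma rho_ge1 x n : 0 < x -> 1 <= rho x n.
Proof. intros Hx. unfold rho. pose proof (pos_INR n) as Hn.
  replace (x + INR n + 2) with (x + (INR n + 1) + 1) by ring.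
  replace (INR n + 2) with ((INR n + 1) + 1) by ring.
  set (p := INR n + 1).
  assert (Hp : 1 <= p) by (unfold p; lra).
  assert (H1 : 1 / (p+1) <= ln ((p+1)/p)).
  { pose proof (ln_ge ((p+1)/p)) as H. assert (1 - / ((p+1)/p) = 1/(p+1)) by (field; lra).
    rewrite H0 in H. apply H. apply Rdiv_lt_0_compat; lra. }
  assert (H2 : 1 + x * (1/(p+1)) <= Rpower ((p+1)/p) x).
  { unfold Rpower. eapply Rle_trans. apply exp_ineq1_le. apply exp_le'.
    apply Rmult_le_compat_l; lra. }
  apply Rle_trans with ((1 + x*(1/(p+1)))*(p+1)/(x+p+1)).
  { right; field; lra. }
  unfold Rdiv. apply Rmult_le_compat_r. left; apply Rinv_0_lt_compat; lra.
  apply Rmult_le_compat_r; lra.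
Qed.

Lemma rho_le x n : 0 < x -> rho x n <= exp (x*(x+1)*(/(INR n + 1) - /(INR n + 2))).
Proof. intros Hx. unfold rho. pose proof (pos_INR n) as Hn.
  replace (x + INR n + 2) with (x + (INR n + 1) + 1) by ring.
  replace (INR n + 2) with ((INR n + 1) + 1) by ring.
  set (p := INR n + 1).
  assert (Hp : 1 <= p) by (unfold p; lra).
  assert (H1 : ln ((p+1)/p) <= 1/p).
  { pose proof (ln_le_sub1 ((p+1)/p)) as H. replace ((p+1)/p - 1) with (1/p) in H by (field; lra).
    apply H. apply Rdiv_lt_0_compat; lra. }
  assert (H2 : Rpower ((p+1)/p) x <= exp (x/p)).
  { unfold Rpower. apply exp_le'. replace (x/p) with (x * (1/p)) by (field; lra).
    apply Rmult_le_compat_l; lra. }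
  assert (H3 : (p+1)/(x+p+1) <= exp (- (x/(x+p+1)))).
  { eapply Rle_trans. 2: apply exp_ineq1_le. right. field. lra. }
  assert (H4 : x/p - x/(x+p+1) <= x*(x+1)*(/p - /(p+1))).
  { replace (x/p - x/(x+p+1)) with (x*(x+1) * / (p*(x+p+1))) by (field; lra).
    replace (/p - /(p+1)) with (/(p*(p+1))) by (field; lra).
    apply Rmult_le_compat_l. nra. apply Rinv_le_contravar; nra. }
  eapply Rle_trans with (exp (x/p) * exp (- (x/(x+p+1)))).
  { replace (Rpower ((p + 1) / p) x * (p + 1) / (x + p + 1)) with
      (Rpower ((p + 1) / p) x * ((p + 1) / (x + p + 1))) by (field; lra).
    apply Rmult_le_compat; try lra. left; unfold Rpower; apply exp_pos.
    left; apply Rdiv_lt_0_compat; lra. }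
  rewrite <- exp_plus. apply exp_le'. lra.
Qed.

Lemma Gseq_bound x n : 0 < x ->
  Gamma_seq x (S n) <= Gamma_seq x 1 * exp (x*(x+1)*(1 - /(INR n + 1))).
Proof. intros Hx. induction n.
  - simpl. replace (x * (x+1) * (1 - / (0 + 1))) with 0 by (field). rewrite exp_0; lra.
  - rewrite Gseq_rec by auto. pose proof (rho_le x n Hx). pose proof (rho_ge1 x n Hx).
    pose proof (Gseq_pos x (S n) Hx).
    eapply Rle_trans. apply Rmult_le_compat; try lra. apply IHn. apply H.
    rewrite Rmult_assoc, <- exp_plus. rewrite S_INR. right. f_equal. f_equal.
    replace (INR n + 1 + 1) with (INR n + 2) by ring. ring.
Qed.

Lemma cv_shift u l : Un_cv (fun n => u (S n)) l -> Un_cv u l.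
Proof. intros H eps He. destruct (H eps He) as [N HN]. exists (S N). intros n Hn.
  destruct n. lia. apply HN. lia. Qed.

Lemma Gamma_cv x : 0 < x -> Un_cv (Gamma_seq x) (Gamma x) /\ 0 < Gamma x.
Proof. intros Hx.
  assert (Hg : Un_growing (fun n => Gamma_seq x (S n))).
  { intros n. simpl. rewrite Gseq_rec by auto. pose proof (rho_ge1 x n Hx).
    pose proof (Gseq_pos x (S n) Hx). nra. }
  assert (Hb : has_ub (fun n => Gamma_seq x (S n))).
  { exists (Gamma_seq x 1 * exp (x*(x+1))). intros y [n ->].
    eapply Rle_trans. apply Gseq_bound; auto. apply Rmult_le_compat_l.
    left; apply Gseq_pos; auto. apply exp_le'.
    assert (0 < / (INR n + 1)) by (apply Rinv_0_lt_compat; pose proof (pos_INR n); lra). nra. }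
  destruct (growing_cv _ Hg Hb) as [l Hl].
  assert (Hl' : Un_cv (Gamma_seq x) l) by (apply cv_shift; auto).
  assert (Hpos : 0 < l).
  { pose proof (growing_ineq _ _ Hg Hl 0). pose proof (Gseq_pos x 1 Hx). simpl in H. lra. }
  assert (HG : Un_cv (Gamma_seq x) (Gamma x)).
  { unfold Gamma. apply epsilon_spec. exists l; auto. }
  split; auto. rewrite (UL_sequence _ _ _ HG Hl'). auto.
Qed.

Notation Pr z n := (prod_f_R0 (fun i => z + INR i) n).

Lemma prod_ineq x y a n : 0 < x < y -> 0 < a ->
  Pr x n * Pr (y+a) n * (y*(x+a)) <= x*(y+a) * (Pr y n * Pr (x+a) n).
Proof. intros [Hx Hxy] Ha. induction n.
  - simpl. right; ring.
  - change (Pr x (S n)) with (Pr x n * (x + INR (S n))).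
    change (Pr y (S n)) with (Pr y n * (y + INR (S n))).
    change (Pr (x+a) (S n)) with (Pr (x+a) n * (x + a + INR (S n))).
    change (Pr (y+a) (S n)) with (Pr (y+a) n * (y + a + INR (S n))).
    pose proof (pos_INR (S n)) as Hm. set (m := INR (S n)) in *.
    assert (Hf : (x+m)*(y+a+m) <= (y+m)*(x+a+m)) by nra.
    pose proof (prod_pos y n ltac:(lra)). pose proof (prod_pos (x+a) n ltac:(lra)).
    pose proof (prod_pos x n ltac:(lra)). pose proof (prod_pos (y+a) n ltac:(lra)).
    set (A := Pr x n) in *. set (B := Pr (y+a) n) in *. set (C := Pr y n) in *. set (D := Pr (x+a) n) in *.
    apply Rle_trans with ((A * B * (y*(x+a))) * ((x+m)*(y+a+m))).
    { right; ring. }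
    apply Rle_trans with ((x*(y+a) * (C*D)) * ((y+m)*(x+a+m))).
    2:{ right; ring. }
    apply Rmult_le_compat; try assumption.
    + left; repeat apply Rmult_lt_0_compat; lra.
    + nra.
Qed.

Lemma cv_const c : Un_cv (fun _ => c) c.
Proof. intros eps He. exists 0%nat. intros n _. unfold Rdist. rewrite Rminus_diag, Rabs_R0. lra. Qed.

Lemma Gamma_ratio x y a : 0 < x < y -> 0 < a ->
  Gamma y * Gamma (x+a) < Gamma x * Gamma (y+a).
Proof. intros [Hx Hxy] Ha.
  set (c := x*(y+a)/(y*(x+a))).
  assert (Hseq : forall n, Gamma_seq y n * Gamma_seq (x+a) n <= c * (Gamma_seq x n * Gamma_seq (y+a) n)).
  { intros n. unfold Gamma_seq.
    pose proof (prod_pos y n ltac:(lra)). pose proof (prod_pos (x+a) n ltac:(lra)).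
    pose proof (prod_pos x n ltac:(lra)). pose proof (prod_pos (y+a) n ltac:(lra)).
    pose proof (prod_ineq x y a n (conj Hx Hxy) Ha) as HP.
    set (A := Pr x n) in *. set (B := Pr (y+a) n) in *. set (C := Pr y n) in *. set (D := Pr (x+a) n) in *.
    set (F := INR (fact n)).
    assert (HQ : Rpower (INR n) x * Rpower (INR n) (y+a) = Rpower (INR n) y * Rpower (INR n) (x+a)).
    { rewrite <- !Rpower_plus. f_equal; ring. }
    set (Q := Rpower (INR n) y * Rpower (INR n) (x+a)).
    assert (HQp : 0 < Q) by (unfold Q, Rpower; apply Rmult_lt_0_compat; apply exp_pos).
    assert (HF : 0 < F) by apply INR_fact_lt_0.
    set (Den := C*D*(A*B)*(y*(x+a))).
    assert (HDen : 0 < Den) by (unfold Den; repeat apply Rmult_lt_0_compat; lra).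
    apply Rle_trans with ((F*F*Q) * (A*B*(y*(x+a))) / Den).
    { right. unfold Q, Den. field. repeat split; lra. }
    apply Rle_trans with ((F*F*Q) * (x*(y+a)*(C*D)) / Den).
    2:{ right. unfold c, Den.
        assert (Hpx : 0 < Rpower (INR n) x) by (unfold Rpower; apply exp_pos).
        assert (HQ' : Rpower (INR n) (y+a) = Q / Rpower (INR n) x) by (unfold Q; rewrite <- HQ; field; lra).
        rewrite HQ'. field. repeat split; lra. }
    unfold Rdiv. apply Rmult_le_compat_r. left; apply Rinv_0_lt_compat; auto.
    apply Rmult_le_compat_l. left; repeat apply Rmult_lt_0_compat; auto; unfold Rpower; apply exp_pos. lra. }
  destruct (Gamma_cv y) as [Cy Py]; try lra.
  destruct (Gamma_cv x) as [Cx Px]; try lra.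
  destruct (Gamma_cv (x+a)) as [Cxa Pxa]; try lra.
  destruct (Gamma_cv (y+a)) as [Cya Pya]; try lra.
  pose proof (CV_mult _ _ _ _ Cy Cxa) as L1.
  pose proof (CV_mult _ _ _ _ (cv_const c) (CV_mult _ _ _ _ Cx Cya)) as L2.
  pose proof (Rle_cv_lim Hseq L1 L2) as Hle.
  assert (Hc : c = 1 - a*(y-x)/(y*(x+a))) by (unfold c; field; lra).
  assert (0 < a*(y-x)/(y*(x+a))) by (apply Rdiv_lt_0_compat; nra).
  assert (0 < Gamma x * Gamma (y+a)) by (apply Rmult_lt_0_compat; auto).
  rewrite Hc in Hle. nra.
Qed.

Definition u a b j := a * INR j + b.
Definition r a b j := Gamma (u a b j + a) / Gamma (u a b j).
Definition t a b lam j := lam ^ j / Gamma (u a b j).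

Lemma u_pos a b j : 0 < a -> 0 < b -> 0 < u a b j.
Proof. intros. unfold u. pose proof (pos_INR j). nra. Qed.

Lemma u_S a b j : u a b (S j) = u a b j + a.
Proof. unfold u. rewrite S_INR. ring. Qed.

Lemma Gpos z : 0 < z -> 0 < Gamma z.
Proof. intros. apply Gamma_cv; auto. Qed.

Lemma r_pos a b j : 0 < a -> 0 < b -> 0 < r a b j.
Proof. intros. unfold r. apply Rdiv_lt_0_compat; apply Gpos; pose proof (u_pos a b j); lra. Qed.

Lemma r_incr a b j : 0 < a -> 0 < b -> r a b j < r a b (S j).
Proof. intros Ha Hb. unfold r. rewrite u_S. pose proof (u_pos a b j Ha Hb) as Hu.
  set (x := u a b j) in *.
  pose proof (Gamma_ratio x (x+a) a ltac:(lra) Ha) as H.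
  pose proof (Gpos x Hu). pose proof (Gpos (x+a) ltac:(lra)). pose proof (Gpos (x+a+a) ltac:(lra)).
  set (A := Gamma x) in *. set (B := Gamma (x+a)) in *. set (C := Gamma (x+a+a)) in *.
  replace (B/A) with (B*B/(A*B)) by (field; lra).
  replace (C/B) with (A*C/(A*B)) by (field; lra).
  unfold Rdiv. apply Rmult_lt_compat_r. apply Rinv_0_lt_compat; nra. lra.
Qed.

Lemma r_mono a b j j' : 0 < a -> 0 < b -> (j < j')%nat -> r a b j < r a b j'.
Proof. intros Ha Hb H. induction H.
  - apply r_incr; auto.
  - eapply Rlt_trans. apply IHle. apply r_incr; auto. Qed.

Lemma r_mono_le a b j j' : 0 < a -> 0 < b -> (j <= j')%nat -> r a b j <= r a b j'.
Proof. intros Ha Hb H. destruct (Nat.eq_dec j j'). subst; lra. left; apply r_mono; auto; lia. Qed.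

Lemma t_pos a b lam j : 0 < a -> 0 < b -> 0 < lam -> 0 < t a b lam j.
Proof. intros. unfold t. apply Rdiv_lt_0_compat. apply pow_lt; auto. apply Gpos, u_pos; auto. Qed.

Lemma t_S a b lam j : 0 < a -> 0 < b -> t a b lam (S j) = t a b lam j * (lam / r a b j).
Proof. intros Ha Hb. unfold t, r. rewrite u_S. simpl.
  pose proof (Gpos _ (u_pos a b j Ha Hb)). pose proof (Gpos (u a b j + a) ltac:(pose proof (u_pos a b j Ha Hb); lra)).
  field. lra. Qed.

Lemma ML_pos a b lam N : 0 < a -> 0 < b -> 0 < lam -> lam < r a b N ->
  0 < MittagLeffler a b lam.
Proof. intros Ha Hb Hl HN.
  set (q := lam / r a b N).
  pose proof (r_pos a b N Ha Hb).
  assert (Hq0 : 0 < q) by (apply Rdiv_lt_0_compat; auto).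
  assert (Hq1 : q < 1) by (unfold q; apply (Rmult_lt_reg_r (r a b N)); auto; field_simplify; lra).
  set (B := q / (1 - q)).
  assert (HB0 : 0 <= B) by (left; apply Rdiv_lt_0_compat; lra).
  assert (HBq : (1 + B) * q = B) by (unfold B; field; lra).
  set (T := t a b lam).
  assert (Tp : forall j, 0 < T j) by (intros; apply t_pos; auto).
  assert (Tdec : forall m, (N <= m)%nat -> T (S m) <= q * T m).
  { intros m Hm. unfold T. rewrite t_S by auto. rewrite Rmult_comm. apply Rmult_le_compat_r.
    left; apply t_pos; auto. unfold q. unfold Rdiv. apply Rmult_le_compat_l. lra.
    apply Rinv_le_contravar; auto. apply r_mono_le; auto. }
  set (Sm := sum_f_R0 T).
  assert (Sg : Un_growing Sm). { intros n. unfold Sm. simpl. pose proof (Tp (Datatypes.S n)). lra. }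
  assert (Inv : forall m, Sm (N+m)%nat + T (N+m)%nat * B <= Sm N + T N * B).
  { induction m. rewrite Nat.add_0_r; lra.
    rewrite Nat.add_succ_r. unfold Sm at 1. simpl. fold Sm.
    pose proof (Tdec (N+m)%nat ltac:(lia)).
    assert ((1+B) * T (Datatypes.S (N+m))%nat <= (1+B) * (q * T (N+m)%nat)) by (apply Rmult_le_compat_l; lra).
    assert ((1+B) * (q * T (N+m)%nat) = B * T (N+m)%nat) by (transitivity ((1+B)*q*T (N+m)%nat); [ring | rewrite HBq; ring]).
    lra. }
  assert (Hub : has_ub Sm).
  { exists (Sm N + T N * B). intros y [n ->].
    destruct (Compare_dec.le_lt_dec n N).
    - pose proof (growing_prop Sm N n Sg l). pose proof (Tp N). nra.
    - replace n with (N + (n - N))%nat by lia. pose proof (Inv (n-N)%nat).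
      pose proof (Tp (N + (n-N))%nat). nra. }
  destruct (growing_cv Sm Sg Hub) as [l Hlim].
  assert (HM : infinite_sum (fun k => lam ^ k / Gamma (a * INR k + b)) (MittagLeffler a b lam)).
  { unfold MittagLeffler. apply epsilon_spec. exists l. exact Hlim. }
  assert (H0 : sum_f_R0 (fun k => lam ^ k / Gamma (a * INR k + b)) 0 <= MittagLeffler a b lam).
  { apply sum_incr. exact HM. intros n. left. exact (Tp n). }
  assert (0 < sum_f_R0 (fun k => lam ^ k / Gamma (a * INR k + b)) 0) by exact (Tp 0%nat).
  lra.
Qed.

Theorem mainTheorem7 (alpha beta : R) (k : nat) :
  0 < alpha -> 0 < beta ->
  let lambda := Gamma (alpha * INR k + alpha + beta) / Gamma (alpha * INR k + beta) in
  MLFD_pmf lambda alpha beta k = MLFD_pmf lambda alpha beta (S k) /\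
  (forall j : nat, j <> k -> j <> S k ->
     MLFD_pmf lambda alpha beta j < MLFD_pmf lambda alpha beta k).
Proof.
  intros Ha Hb lambda.
  assert (Hlam : lambda = r alpha beta k).
  { unfold lambda, r, u. f_equal. f_equal. ring. }
  clearbody lambda. subst lambda.
  set (lam := r alpha beta k).
  assert (Hl : 0 < lam) by (apply r_pos; auto).
  assert (HM : 0 < MittagLeffler alpha beta lam).
  { apply (ML_pos alpha beta lam (S k)); auto. apply r_mono; auto. }
  set (M := MittagLeffler alpha beta lam) in *.
  assert (Hp : forall j, MLFD_pmf lam alpha beta j = t alpha beta lam j / M).
  { intros j. unfold MLFD_pmf, t, u. fold M.
    pose proof (Gpos _ (u_pos alpha beta j Ha Hb)). unfold u in H. field. lra. }
  set (T := t alpha beta lam).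
  assert (Tp : forall j, 0 < T j) by (intros; apply t_pos; auto).
  assert (TS : forall j, T (S j) = T j * (lam / r alpha beta j)) by (intros; apply t_S; auto).
  assert (Hdiv : forall x y, x < y -> x / M < y / M).
  { intros x y H. unfold Rdiv. apply Rmult_lt_compat_r. apply Rinv_0_lt_compat; auto. auto. }
  rewrite !Hp. fold T. split.
  - f_equal. rewrite TS. unfold lam at 1. field. pose proof (r_pos alpha beta k Ha Hb). fold lam. lra.
  - intros j Hjk HjS. rewrite !Hp. apply Hdiv. fold T.
    assert (Hup : forall m, (m < k)%nat -> T m < T (S m)).
    { intros m Hm. rewrite TS. pose proof (Tp m). pose proof (r_mono alpha beta m k Ha Hb Hm).
      pose proof (r_pos alpha beta m Ha Hb). fold lam in H0.
      assert (1 < lam / r alpha beta m).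
      { apply (Rmult_lt_reg_r (r alpha beta m)); auto. field_simplify; lra. }
      nra. }
    assert (Hdown : forall m, (k < m)%nat -> T (S m) < T m).
    { intros m Hm. rewrite TS. pose proof (Tp m). pose proof (r_mono alpha beta k m Ha Hb Hm).
      pose proof (r_pos alpha beta m Ha Hb). fold lam in H0.
      assert (lam / r alpha beta m < 1).
      { apply (Rmult_lt_reg_r (r alpha beta m)); auto. field_simplify; lra. }
      nra. }
    destruct (Compare_dec.lt_eq_lt_dec j k) as [[Hlt|Heq]|Hgt]; [|congruence|].
    + assert (Hinc : forall d, (j + S d <= k)%nat -> T j < T (j + S d)%nat).
      { induction d; intros Hd.
        - rewrite Nat.add_1_r. apply Hup. lia.
        - rewrite Nat.add_succ_r. eapply Rlt_trans. apply IHd. lia. apply Hup. lia. }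
      pose proof (Hinc (k - j - 1)%nat ltac:(lia)) as Hh. replace (j + S (k-j-1))%nat with k in Hh by lia. exact Hh.
    + assert (Hdec : forall d, T (S (S k) + d)%nat < T k).
      { induction d.
        - rewrite Nat.add_0_r. replace (T k) with (T (S k)).
          apply Hdown. lia. rewrite TS. unfold lam at 1. field.
          pose proof (r_pos alpha beta k Ha Hb). fold lam. lra.
        - rewrite Nat.add_succ_r. eapply Rlt_trans. apply Hdown. lia. apply IHd. }
      replace j with (S (S k) + (j - S (S k)))%nat by lia. apply Hdec.
Qed.
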